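(* Let $a,b,c$ be positive numbers with $a<b<c$, $\lfloor c/b\rfloor\ge2$, $b-a<c_0<a$ and $0\le c_1\le2a-b$, where $c_0=c-\lfloor c/b\rfloor b$ and $c_1=c-c_0-\lfloor(c-c_0)/a\rfloor a$. Suppose $\mathcal S_{a,b,c}\ne\emptyset$ and either $a/b\notin\mathbb Q$, or $a/b=p/q$ and $c\in(b/q)\mathbb Z$ for some coprime positive integers $p,q$. Then for every $t\in\mathcal S_{a,b,c}$, $$Y_{a,b,c}(R_{a,b,c}(t))-Y_{a,b,c}(t)-Y_{a,b,c}(c_1+b-a)\in Y_{a,b,c}(a)\mathbb Z.$$
   Context: For $a,b,c>0$ and $t\in\mathbb R$, $\mathbf M_{a,b,c}(t)=(\chi_{[0,c)}(t-\mu+\lambda))_{\mu\in a\mathbb Z,\lambda\in b\mathbb Z}$ is the infinite matrix with rows indexed by $a\mathbb Z$ and columns by $b\mathbb Z$, acting by $(\mathbf M_{a,b,c}(t)\mathbf x)(\mu)=\sum_{\lambda\in b\mathbb Z}\chi_{[0,c)}(t-\mu+\lambda)\mathbf x(\lambda)$. $\mathcal B_b^0$ is the set of vectors $(\mathbf x(\lambda))_{\lambda\in b\mathbb Z}$ with entries in $\{0,1\}$ and $\mathbf x(0)=1$. $\mathbf 1$ denotes the vector indexed by $a\mathbb Z$ with all entries $1$. $\mathcal S_{a,b,c}=\{t:\mathbf M_{a,b,c}(t)\mathbf x=\mathbf 1\text{ for some }\mathbf x\in\mathcal B_b^0\}$. $R_{a,b,c}(t)=t+\lfloor c/b\rfloor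 b+b$ if $t\in[0,c_0+a-b)+a\mathbb Z$, $R_{a,b,c}(t)=t$ if $t\in[c_0+a-b,c_0)+a\mathbb Z$, $R_{a,b,c}(t)=t+\lfloor c/b\rfloor b$ if $t\in[c_0,a)+a\mathbb Z$. The holes-removal map is $Y_{a,b,c}(t)=\operatorname{sgn}(t)\,|[\min(0,t),\max(0,t))\cap\mathcal S_{a,b,c}|$ with $|\cdot|$ Lebesgue measure. $A+a\mathbb Z=\{x+ak:x\in A,k\in\mathbb Z\}$. *)

(* Defs.v *)
From Stdlib Require Import Reals ZArith ClassicalEpsilon.
Open Scope R_scope.

(* floor function: Int_part r = up r - 1 = floor r *)
Definition floorR (x : R) : R := IZR (Int_part x).

Definition chi0c (c x : R) : R :=
  if Rle_dec 0 x then (if Rlt_dec x c then 1 else 0) else 0.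

(* B_b^0 : vectors indexed by bZ (index k <-> lambda = b k) with 0/1 entries and x(0)=1 *)
Definition in_B0 (x : Z -> bool) : Prop := x 0%Z = true.

(* (M_{a,b,c}(t) x)(mu) = 1 for mu = a m.  Since all entries are 0/1 the
   (finitely supported) row sum sum_k chi_[0,c)(t - a m + b k) x(k) equals 1
   iff exactly one index k has x k = true and chi = 1. *)
Definition row_sum_is_one (a b c t : R) (x : Z -> bool) (m : Z) : Prop :=
  exists! k : Z, x k = true /\ chi0c c (t - a * IZR m + b * IZR k) = 1.

Definition Mx_eq_1 (a b c t : R) (x : Z -> bool) : Prop :=
  forall m : Z, row_sum_is_one a b c t x m.

Definition S_abc (a b c : R) (t : R) : Prop :=
  exists x : Z -> bool, in_B0 x /\ Mx_eq_1 a b c t x.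

Definition c0_of (b c : R) : R := c - floorR (c / b) * b.
Definition c1_of (a b c : R) : R :=
  c - c0_of b c - floorR ((c - c0_of b c) / a) * a.

Definition mod_a (a t : R) : R := t - a * floorR (t / a).

Definition R_abc (a b c t : R) : R :=
  let c0 := c0_of b c in
  let s := mod_a a t in
  if Rlt_dec s (c0 + a - b) then t + floorR (c / b) * b + b
  else if Rlt_dec s c0 then t
  else t + floorR (c / b) * b.

(* Lebesgue (outer) measure, for sets of finite measure:
   infimum of total lengths of countable covers by intervals [l_n, r_n). *)
Definition cover_length (A : R -> Prop) (L : R) : Prop :=
  exists l r : nat -> R,
    (forall n, l n <= r n) /\
    infinite_sum (fun n => r n - l n) L /\
    (forall x, A x -> exists n, l n <= x < r n).

Definition is_glb (E : R -> Prop) (m : R) : Prop :=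
  (forall y, E y -> m <= y) /\ (forall m', (forall y, E y -> m' <= y) -> m' <= m).

Definition leb_measure (A : R -> Prop) : R :=
  epsilon (inhabits 0) (fun m => is_glb (cover_length A) m).

Definition sgn (t : R) : R :=
  if Rlt_dec 0 t then 1 else if Rlt_dec t 0 then -1 else 0.

Definition Y_abc (a b c t : R) : R :=
  sgn t * leb_measure (fun x => Rmin 0 t <= x < Rmax 0 t /\ S_abc a b c x).

(* Main.v *)
Require Import Defs.
From Stdlib Require Import Reals ZArith.
From Stdlib Require Import Lra Lia Psatz Classical FunctionalExtensionality PropExtensionality ClassicalEpsilon.
Open Scope R_scope.

Definition G (P : R -> Prop) (x y : R) : R := leb_measure (fun u => x <= u < y /\ P u).

Lemma psum_growing (f : nat -> R) : (forall n, 0 <= f n) -> Un_growing (fun n => sum_f_R0 f n).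
Proof. intros H n. simpl. specialize (H (S n)). lra. Qed.

Lemma cover_nonneg A L : cover_length A L -> 0 <= L.
Proof.
  intros (l & r & Hlr & Hs & _).
  assert (H0 : forall n, 0 <= r n - l n) by (intro n; specialize (Hlr n); lra).
  pose proof (sum_incr _ 0 L Hs H0) as H. simpl in H. specialize (H0 0%nat). lra.
Qed.

Lemma cover_interval (A : R -> Prop) x y : x <= y -> (forall u, A u -> x <= u < y) -> cover_length A (y - x).
Proof.
  intros Hxy HA. exists (fun _ => x), (fun n => match n with O => y | _ => x end).
  split; [intros [|n]; lra|]. split.
  - intros eps He. exists 0%nat. intros n _.
    assert (E : sum_f_R0 (fun n => (match n with O => y | _ => x end) - x) n = y - x).
    { induction n; simpl; [lra|]. rewrite IHn. lra. }
    rewrite E. unfold R_dist. replace (y - x - (y - x)) with 0 by ring. rewrite Rabs_R0. exact He.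
  - intros u Hu. exists 0%nat. apply HA in Hu. lra.
Qed.

Lemma glb_ex A : (exists L, cover_length A L) -> Defs.is_glb (cover_length A) (leb_measure A).
Proof.
  intros [L0 HL0]. unfold leb_measure. apply epsilon_spec.
  destruct (completeness (fun y => cover_length A (- y))) as [m [Hub Hlub]].
  - exists 0. intros y Hy. apply cover_nonneg in Hy. lra.
  - exists (- L0). rewrite Ropp_involutive. exact HL0.
  - exists (- m). split.
    + intros y Hy. assert (- y <= m). { apply Hub. rewrite Ropp_involutive. exact Hy. } lra.
    + intros m' Hm'. assert (m <= - m'). { apply Hlub. intros y Hy. specialize (Hm' _ Hy). lra. } lra.
Qed.

Lemma meas_le A L : cover_length A L -> leb_measure A <= L.
Proof. intros H. destruct (glb_ex A (ex_intro _ L H)) as [H1 _]. auto. Qed.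

Lemma meas_ge A M : (exists L, cover_length A L) -> (forall L, cover_length A L -> M <= L) -> M <= leb_measure A.
Proof. intros Hex H. destruct (glb_ex A Hex) as [_ H2]. auto. Qed.

Lemma meas_approx A eps : (exists L, cover_length A L) -> eps > 0 -> exists L, cover_length A L /\ L < leb_measure A + eps.
Proof.
  intros Hex He. apply NNPP. intro Hn.
  assert (leb_measure A + eps <= leb_measure A).
  { apply meas_ge; auto. intros L HL. apply Rnot_lt_le. intro Hlt. apply Hn. eauto. }
  lra.
Qed.

Lemma G_bdd P x y : exists L, cover_length (fun u => x <= u < y /\ P u) L.
Proof.
  exists (Rmax x y - x). apply cover_interval; [apply Rmax_l|].
  intros u [[H1 H2] _]. split; [lra|]. apply Rlt_le_trans with y; [lra|apply Rmax_r].
Qed.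

Lemma G_nonneg P x y : 0 <= G P x y.
Proof. apply meas_ge; [apply G_bdd|]. apply cover_nonneg. Qed.

Lemma G_zero P x y : (forall u, x <= u < y -> ~ P u) -> G P x y = 0.
Proof.
  intros H. apply Rle_antisym; [|apply G_nonneg].
  replace 0 with (0 - 0) by ring. apply meas_le. apply cover_interval; [lra|].
  intros u [Hu HP]. exfalso. exact (H u Hu HP).
Qed.

Lemma G_ext P Q x y : (forall u, x <= u < y -> (P u <-> Q u)) -> G P x y = G Q x y.
Proof.
  intros H. unfold G. f_equal. apply functional_extensionality; intro u.
  apply propositional_extensionality. specialize (H u). tauto.
Qed.

Lemma cover_shift A h L : cover_length A L -> cover_length (fun u => A (u - h)) L.
Proof.
  intros (l & r & Hlr & Hs & Hc). exists (fun n => l n + h), (fun n => r n + h).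
  split; [intro n; specialize (Hlr n); lra|]. split.
  - replace (fun n => r n + h - (l n + h)) with (fun n => r n - l n); [exact Hs|].
    apply functional_extensionality; intro n; ring.
  - intros u Hu. destruct (Hc _ Hu) as [n Hn]. exists n. lra.
Qed.

Lemma meas_shift A h : leb_measure (fun u => A (u - h)) = leb_measure A.
Proof.
  assert (E : cover_length (fun u => A (u - h)) = cover_length A).
  { apply functional_extensionality; intro L. apply propositional_extensionality. split.
    - intro H. apply cover_shift with (h := - h) in H.
      replace (fun u => A (u - - h - h)) with A in H; [exact H|].
      apply functional_extensionality; intro u. f_equal. ring.
    - apply cover_shift. }
  unfold leb_measure. rewrite E. reflexivity.
Qed.

Lemma G_shift P x y h : G P x y = G (fun u => P (u - h)) (x + h) (y + h).
Proof.
  unfold G. rewrite <- (meas_shift (fun u => x <= u < y /\ P u) h). f_equal.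
  apply functional_extensionality; intro u. apply propositional_extensionality.
  split; intros [H1 H2]; split; auto; lra.
Qed.

Lemma conv_bounded (f : nat -> R) M : (forall n, 0 <= f n) -> (forall n, sum_f_R0 f n <= M) ->
  exists L, infinite_sum f L /\ L <= M.
Proof.
  intros H0 HM. destruct (growing_cv (fun n => sum_f_R0 f n)) as [L HL].
  - apply psum_growing; auto.
  - exists M. intros y [n ->]. apply HM.
  - exists L. split; [exact HL|].
    apply (Rle_cv_lim (Un := fun n => sum_f_R0 f n) (Vn := fun _ => M)); auto.
    intros eps He; exists 0%nat; intros; unfold R_dist.
    replace (M - M) with 0 by ring. rewrite Rabs_R0; lra.
Qed.

Lemma G_super P x y z : x <= y -> y <= z -> G P x y + G P y z <= G P x z.
Proof.
  intros Hxy Hyz. unfold G at 3. apply meas_ge; [apply G_bdd|].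
  intros L (l & r & Hlr & Hs & Hc).
  set (f1 := fun n => Rmax (l n) (Rmin (r n) y) - l n).
  set (f2 := fun n => r n - Rmin (r n) (Rmax (l n) y)).
  assert (Hf : forall n, 0 <= f1 n /\ 0 <= f2 n /\ f1 n + f2 n = r n - l n).
  { intro n; unfold f1, f2; specialize (Hlr n). unfold Rmax, Rmin; repeat destruct Rle_dec; lra. }
  assert (HsumL : forall n, sum_f_R0 (fun k => r k - l k) n <= L).
  { intro n; apply sum_incr; [exact Hs| intro k; specialize (Hlr k); lra]. }
  assert (Hsum : forall n, sum_f_R0 f1 n + sum_f_R0 f2 n = sum_f_R0 (fun k => r k - l k) n).
  { intro n; rewrite <- sum_plus. apply sum_eq. intros; apply Hf. }
  destruct (conv_bounded f1 L) as [L1 [H1 _]].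
  { intro; apply Hf. }
  { intro n; specialize (Hsum n); pose proof (cond_pos_sum f2 n (fun k => proj1 (proj2 (Hf k)))); specialize (HsumL n); lra. }
  destruct (conv_bounded f2 L) as [L2 [H2 _]].
  { intro; apply Hf. }
  { intro n; specialize (Hsum n); pose proof (cond_pos_sum f1 n (fun k => proj1 (Hf k))); specialize (HsumL n); lra. }
  assert (E : L1 + L2 = L).
  { apply UL_sequence with (fun n => sum_f_R0 (fun k => r k - l k) n); [| exact Hs].
    replace (fun n => sum_f_R0 (fun k => r k - l k) n) with (fun i => sum_f_R0 f1 i + sum_f_R0 f2 i).
    - apply CV_plus; assumption.
    - apply functional_extensionality; intro n; apply Hsum. }
  assert (G1 : G P x y <= L1).
  { apply meas_le. exists l, (fun n => Rmax (l n) (Rmin (r n) y)). split; [intro; apply Rmax_l|].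
    split; [exact H1|]. intros u [Hu HP]. destruct (Hc u (conj (conj (proj1 Hu) (Rlt_le_trans _ _ _ (proj2 Hu) Hyz)) HP)) as [n Hn].
    exists n. unfold Rmax, Rmin; repeat destruct Rle_dec; lra. }
  assert (G2 : G P y z <= L2).
  { apply meas_le. exists (fun n => Rmin (r n) (Rmax (l n) y)), r.
    split; [intro; apply Rmin_l|].
    split; [exact H2|]. intros u [Hu HP]. destruct (Hc u (conj (conj (Rle_trans _ _ _ Hxy (proj1 Hu)) (proj2 Hu)) HP)) as [n Hn].
    exists n. unfold Rmax, Rmin; repeat destruct Rle_dec; lra. }
  lra.
Qed.

Definition ilv (f g : nat -> R) (k : nat) : R := if Nat.even k then f (Nat.div2 k) else g (Nat.div2 k).
Lemma ilv_even f g n : ilv f g (2*n) = f n.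
Proof. unfold ilv. rewrite Nat.even_mul, Nat.div2_double. reflexivity. Qed.
Lemma ilv_odd f g n : ilv f g (S (2*n)) = g n.
Proof. unfold ilv. rewrite Nat.even_succ, Nat.odd_mul, Nat.div2_succ_double. reflexivity. Qed.

Lemma sum_ilv f g n : sum_f_R0 (ilv f g) (S (2*n)) = sum_f_R0 f n + sum_f_R0 g n.
Proof.
  induction n.
  - simpl. unfold ilv. simpl. ring.
  - assert (E1 : ilv f g (S (S (2*n))) = f (S n)).
    { replace (S (S (2*n))) with (2 * S n)%nat by lia. apply ilv_even. }
    assert (E2 : ilv f g (S (S (S (2*n)))) = g (S n)).
    { replace (S (S (S (2*n)))) with (S (2 * S n))%nat by lia. apply ilv_odd. }
    replace (S (2 * S n)) with (S (S (S (2*n)))) by lia.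
    rewrite tech5, tech5, IHn, E1, E2, !tech5. ring.
Qed.

Lemma growing_mono (U : nat -> R) : Un_growing U -> forall n m, (n <= m)%nat -> U n <= U m.
Proof.
  intros H n m Hnm. induction Hnm; [lra|]. specialize (H m). lra.
Qed.

Lemma G_sub P x y z : x <= y -> y <= z -> G P x z <= G P x y + G P y z.
Proof.
  intros Hxy Hyz.
  apply Rnot_lt_le; intro Hlt.
  set (e := (G P x z - (G P x y + G P y z)) / 4).
  assert (He : e > 0) by (unfold e; lra).
  destruct (meas_approx _ e (G_bdd P x y) He) as [L1 [(l1 & r1 & Hlr1 & Hs1 & Hc1) HL1]].
  destruct (meas_approx _ e (G_bdd P y z) He) as [L2 [(l2 & r2 & Hlr2 & Hs2 & Hc2) HL2]].
  set (l := ilv l1 l2). set (r := ilv r1 r2).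
  assert (Hlr : forall n, l n <= r n). { intro n; unfold l, r, ilv; destruct (Nat.even n); auto. }
  assert (Hterm : forall n, r n - l n = ilv (fun k => r1 k - l1 k) (fun k => r2 k - l2 k) n).
  { intro n; unfold l, r, ilv; destruct (Nat.even n); reflexivity. }
  assert (Hp1 : forall k, 0 <= r1 k - l1 k) by (intro k; specialize (Hlr1 k); lra).
  assert (Hp2 : forall k, 0 <= r2 k - l2 k) by (intro k; specialize (Hlr2 k); lra).
  destruct (conv_bounded (fun n => r n - l n) (L1 + L2)) as [L [HL HLle]].
  - intro n; specialize (Hlr n); lra.
  - intro n.
    apply Rle_trans with (sum_f_R0 (fun n => r n - l n) (S (2*n))).
    + apply (growing_mono (fun m => sum_f_R0 (fun n => r n - l n) m)); [|lia].
      apply psum_growing. intro k; specialize (Hlr k); lra.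
    + rewrite (sum_eq _ _ _ (fun i _ => Hterm i)). rewrite sum_ilv.
      pose proof (sum_incr _ n L1 Hs1 Hp1). pose proof (sum_incr _ n L2 Hs2 Hp2). lra.
  - assert (G P x z <= L).
    { unfold G at 1; apply meas_le. exists l, r. split; auto. split; auto.
      intros u [Hu HP]. destruct (Rlt_le_dec u y) as [Huy|Huy].
      + destruct (Hc1 u (conj (conj (proj1 Hu) Huy) HP)) as [n Hn].
        exists (2*n)%nat. unfold l, r; rewrite !ilv_even; auto.
      + destruct (Hc2 u (conj (conj Huy (proj2 Hu)) HP)) as [n Hn].
        exists (S (2*n)). unfold l, r; rewrite !ilv_odd; auto. }
    change (leb_measure (fun u => x <= u < y /\ P u)) with (G P x y) in HL1.
    change (leb_measure (fun u => y <= u < z /\ P u)) with (G P y z) in HL2.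
    unfold e in *; lra.
Qed.

Lemma G_split P x y z : x <= y -> y <= z -> G P x z = G P x y + G P y z.
Proof. intros; apply Rle_antisym; [apply G_sub | apply G_super]; auto. Qed.

Lemma chi_iff c y : chi0c c y = 1 <-> 0 <= y < c.
Proof. unfold chi0c. destruct (Rle_dec 0 y); destruct (Rlt_dec y c); split; intros; try lra. Qed.

Lemma shiftS a b c t x k1 : Mx_eq_1 a b c t x -> x k1 = true -> S_abc a b c (t + b * IZR k1).
Proof.
  intros H Hk. exists (fun k => x (k + k1)%Z). split.
  - unfold in_B0. cbn. exact Hk.
  - intro m. destruct (H m) as [k0 [[Hx Hc] Hu]]. exists (k0 - k1)%Z. split.
    + rewrite Z.sub_add. split; auto.
      replace (t + b*IZR k1 - a*IZR m + b*IZR (k0-k1)) with (t - a*IZR m + b*IZR k0)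
        by (rewrite minus_IZR; ring). exact Hc.
    + intros k' [Hx' Hc']. assert (k0 = k' + k1)%Z; [|lia].
      apply Hu. split; auto.
      replace (t - a*IZR m + b*IZR (k' + k1)) with (t + b*IZR k1 - a*IZR m + b*IZR k')
        by (rewrite plus_IZR; ring). exact Hc'.
Qed.

Lemma perS a b c t j : S_abc a b c t -> S_abc a b c (t + a * IZR j).
Proof.
  intros [x [H0 H]]. exists x. split; auto. intro m.
  destruct (H (m - j)%Z) as [k0 [[Hx Hc] Hu]]. exists k0. split.
  - split; auto. replace (t + a*IZR j - a*IZR m + b*IZR k0) with (t - a*IZR (m-j) + b*IZR k0)
      by (rewrite minus_IZR; ring). exact Hc.
  - intros k' [Hx' Hc']. apply Hu. split; auto.
    replace (t - a*IZR (m-j) + b*IZR k') with (t + a*IZR j - a*IZR m + b*IZR k')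
      by (rewrite minus_IZR; ring). exact Hc'.
Qed.

Lemma perS_iff a b c t j : S_abc a b c (t + a * IZR j) <-> S_abc a b c t.
Proof.
  split; [|apply perS].
  intro H; apply perS with (j := (-j)%Z) in H. rewrite opp_IZR in H.
  replace (t + a*IZR j + a * - IZR j) with t in H by ring. exact H.
Qed.

Lemma floor_unique y z : IZR z <= y < IZR z + 1 -> Int_part y = z.
Proof.
  intros [H1 H2]. unfold Int_part. rewrite <- (tech_up y (z+1)); [lia| rewrite plus_IZR; lra | rewrite plus_IZR; lra].
Qed.

Lemma floor_div a w z : 0 < a -> a * IZR z <= w < a * IZR z + a -> Int_part (w / a) = z.
Proof.
  intros Ha [H1 H2]. apply floor_unique.
  assert (E : w / a * a = w) by (field; lra).
  set (q := w / a) in *. set (Z0 := IZR z) in *. split; nra.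
Qed.

Lemma mod_bounds a t : 0 < a -> 0 <= mod_a a t < a.
Proof.
  intros Ha. unfold mod_a, floorR. destruct (base_Int_part (t/a)) as [H1 H2].
  assert (E : t / a * a = t) by (field; lra).
  set (q := t / a) in *. set (z := IZR (Int_part q)) in *. split; nra.
Qed.

Lemma mod_eq a w z : 0 < a -> a * IZR z <= w < a * IZR z + a -> mod_a a w = w - a * IZR z.
Proof. intros Ha H. unfold mod_a, floorR. rewrite (floor_div a w z Ha H). ring. Qed.

Section Abc.
Variables a b c : R.
Hypothesis Ha : 0 < a.
Hypothesis Hab : a < b.
Hypothesis Hbc : b < c.
Hypothesis Hc0l : b - a < c0_of b c.
Hypothesis Hc0u : c0_of b c < a.

Lemma step_arith t k1 :
  c - mod_a a t <= b * IZR k1 < c - mod_a a t + a ->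
  R_abc a b c t = t + b * IZR k1 /\ ~ (c0_of b c + a - b <= mod_a a t < c0_of b c).
Proof.
  intros [H1 H2].
  pose proof (mod_bounds a t Ha) as [Hr0 Hr1].
  unfold R_abc. cbv zeta. unfold c0_of in *. unfold floorR in *.
  set (r := mod_a a t) in *. set (n := Int_part (c/b)) in *.
  set (j := (k1 - n)%Z).
  assert (Hj : IZR k1 = IZR j + IZR n) by (unfold j; rewrite minus_IZR; ring).
  rewrite Hj in *.
  assert (Hj01 : j = 0%Z \/ j = 1%Z).
  { destruct (Z.le_gt_cases j (-1)) as [Hle|Hgt].
    - apply IZR_le in Hle. assert (b * IZR j <= - b) by nra. lra.
    - destruct (Z.le_gt_cases 2 j) as [Hle2|Hlt2]; [|lia].
      apply IZR_le in Hle2. assert (b * IZR j >= 2 * b) by nra. lra. }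
  destruct Hj01 as [-> | ->]; change (IZR 0) with 0 in *; change (IZR 1) with 1 in *.
  - destruct (Rlt_dec r (c - IZR n * b + a - b)); [lra|].
    destruct (Rlt_dec r (c - IZR n * b)); [lra|]. split; [ring|lra].
  - destruct (Rlt_dec r (c - IZR n * b + a - b)); [|lra]. split; [ring|lra].
Qed.

Lemma step_exists t x : Mx_eq_1 a b c t x -> x 0%Z = true ->
  exists k1, x k1 = true /\ c - mod_a a t <= b * IZR k1 < c - mod_a a t + a.
Proof.
  intros H H0.
  pose proof (mod_bounds a t Ha) as [Hr0 Hr1].
  unfold mod_a, floorR in *. set (K := Int_part (t/a)) in *.
  destruct (H K) as [k0 [_ Hu]].
  destruct (H (K+1)%Z) as [k1 [[Hx1 Hc1] _]].
  apply chi_iff in Hc1. rewrite plus_IZR in Hc1.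
  exists k1. split; auto.
  destruct (Rlt_le_dec (t - a*IZR K + b*IZR k1) c) as [Hlt|Hge].
  - exfalso. assert (E1: k0 = k1) by (apply Hu; split; auto; apply chi_iff; lra).
    assert (E0: k0 = 0%Z) by (apply Hu; split; auto; apply chi_iff; change (IZR 0) with 0; lra).
    subst. change (IZR 0) with 0 in Hc1. lra.
  - split; lra.
Qed.

Lemma S_forward t : S_abc a b c t ->
  S_abc a b c (R_abc a b c t) /\ ~ (c0_of b c + a - b <= mod_a a t < c0_of b c).
Proof.
  intros [x [H0 H]]. destruct (step_exists t x H H0) as [k1 [Hx Hk]].
  destruct (step_arith t k1 Hk) as [HR Hh]. split; auto. rewrite HR. apply shiftS with x; auto.
Qed.

Lemma S_backward v : S_abc a b c v -> exists w, S_abc a b c w /\ R_abc a b c w = v.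
Proof.
  intros [x [H0 H]].
  set (f := Int_part ((v - c)/a)).
  assert (Hf : a*IZR f <= v - c < a*IZR f + a).
  { destruct (base_Int_part ((v - c)/a)) as [H1 H2]. fold f in H1, H2.
    assert (E : (v - c) / a * a = v - c) by (field; lra).
    set (q := (v - c) / a) in *. set (z := IZR f) in *. split; nra. }
  destruct (H f) as [k [[Hx Hc] Hu]].
  apply chi_iff in Hc.
  set (w := v + b*IZR k).
  assert (Sw : S_abc a b c w) by (apply shiftS with x; auto).
  destruct (H (f+1)%Z) as [k' [_ Hu']].
  assert (Hw : a*IZR f <= w < a*IZR f + a).
  { split; [unfold w; lra|].
    destruct (Rlt_le_dec w (a*IZR f + a)) as [Hl|Hl]; auto. exfalso.
    assert (E1 : k' = k) by (apply Hu'; split; auto; apply chi_iff; rewrite plus_IZR; unfold w in Hl; lra).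
    assert (E2 : k' = 0%Z) by (apply Hu'; split; auto; apply chi_iff; rewrite plus_IZR; change (IZR 0) with 0; lra).
    rewrite E1 in E2. rewrite E2 in Hc. change (IZR 0) with 0 in Hc. lra. }
  exists w. split; auto.
  assert (Hm : mod_a a w = w - a*IZR f) by (apply mod_eq; auto).
  destruct (step_arith w (-k)) as [HR _].
  - rewrite Hm, opp_IZR. unfold w. split; lra.
  - rewrite HR. unfold w. rewrite opp_IZR. ring.
Qed.

End Abc.

Section Y.
Variables a b c : R.
Hypothesis Ha : 0 < a.
Let SS := S_abc a b c.
Let Y := Y_abc a b c.

Lemma Y_pos t : 0 <= t -> Y t = G SS 0 t.
Proof.
  intros Ht. unfold Y, Y_abc, sgn, G. destruct (Rlt_dec 0 t) as [Hp|Hp].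
  - rewrite Rmin_left, Rmax_right by lra. unfold SS. ring.
  - assert (t = 0) by lra. subst t. destruct (Rlt_dec 0 0); [lra|].
    rewrite Rmult_0_l. symmetry. apply (G_zero SS 0 0). intros; lra.
Qed.

Lemma Y_neg t : t < 0 -> Y t = - G SS t 0.
Proof.
  intros Ht. unfold Y, Y_abc, sgn, G. destruct (Rlt_dec 0 t) as [Hp|Hp]; [lra|].
  destruct (Rlt_dec t 0); [|lra].
  rewrite Rmin_right, Rmax_left by lra. unfold SS; ring.
Qed.

Lemma Ydiff x y : x <= y -> Y y - Y x = G SS x y.
Proof.
  intros Hxy. destruct (Rle_dec 0 x) as [Hx|Hx].
  - rewrite !Y_pos by lra. rewrite (G_split SS 0 x y) by lra. ring.
  - destruct (Rle_dec 0 y) as [Hy|Hy].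
    + rewrite Y_pos, Y_neg by lra. rewrite (G_split SS x 0 y) by lra. ring.
    + rewrite !Y_neg by lra. rewrite (G_split SS x y 0) by lra. ring.
Qed.

Lemma Gper x y j : G SS (x + a * IZR j) (y + a * IZR j) = G SS x y.
Proof.
  rewrite (G_shift SS x y (a * IZR j)). apply G_ext. intros u _.
  unfold SS. rewrite <- (perS_iff a b c (u - a * IZR j) j).
  replace (u - a * IZR j + a * IZR j) with u by ring. tauto.
Qed.

Lemma Gperiod x : G SS x (x + a) = Y a.
Proof.
  pose proof (mod_bounds a x Ha) as [Hr0 Hr1].
  set (r := mod_a a x) in *. set (K := Int_part (x / a)).
  assert (Ex : x = r + a * IZR K) by (unfold r, mod_a, floorR, K; ring).
  rewrite Ex. replace (r + a * IZR K + a) with ((r + a) + a * IZR K) by ring.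
  rewrite Gper. rewrite (G_split SS r a (r + a)) by lra.
  replace (G SS a (r + a)) with (G SS (0 + a * IZR 1) (r + a * IZR 1))
    by (f_equal; change (IZR 1) with 1; ring).
  rewrite Gper. rewrite Y_pos by lra. rewrite (G_split SS 0 r a) by lra. ring.
Qed.

Lemma Yshift_nat x n : Y (x + a * INR n) = Y x + INR n * Y a.
Proof.
  induction n.
  - simpl. replace (x + a * 0) with x by ring. ring.
  - rewrite S_INR. pose proof (Ydiff (x + a * INR n) (x + a * (INR n + 1))) as D.
    replace (G SS (x + a * INR n) (x + a * (INR n + 1))) with (G SS (x + a * INR n) (x + a * INR n + a)) in D
      by (f_equal; ring).
    rewrite Gperiod in D. assert (0 <= INR n) by apply pos_INR.
    specialize (D ltac:(nra)). lra.
Qed.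

Lemma Yshift x j : Y (x + a * IZR j) = Y x + IZR j * Y a.
Proof.
  destruct (Z_le_gt_dec 0 j) as [Hj|Hj].
  - rewrite <- (Z2Nat.id j Hj). rewrite <- INR_IZR_INZ. apply Yshift_nat.
  - assert (Ej : j = (- Z.of_nat (Z.to_nat (- j)))%Z) by lia.
    rewrite Ej, opp_IZR, <- INR_IZR_INZ. set (n := Z.to_nat (-j)).
    pose proof (Yshift_nat (x + a * - INR n) n) as D.
    replace (x + a * - INR n + a * INR n) with x in D by ring. lra.
Qed.

End Y.

Section Main.
Variables a b c : R.
Hypothesis Ha : 0 < a.
Hypothesis Hab : a < b.
Hypothesis Hbc : b < c.
Hypothesis Hc0l : b - a < c0_of b c.
Hypothesis Hc0u : c0_of b c < a.

Let nn := floorR (c / b).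
Let c0 := c0_of b c.
Let N := Int_part ((c - c0) / a).
Let c1 := c1_of a b c.

Lemma key : nn * b = c1 + a * IZR N.
Proof. unfold c1, c1_of, N, nn, c0, c0_of, floorR. ring. Qed.

Lemma R_A t : mod_a a t < c0 + a - b -> R_abc a b c t = t + nn * b + b.
Proof. intros H. unfold R_abc. cbv zeta. fold c0. destruct (Rlt_dec (mod_a a t) (c0 + a - b)); [reflexivity|lra]. Qed.

Lemma R_B t : c0 <= mod_a a t -> R_abc a b c t = t + nn * b.
Proof.
  intros H. unfold R_abc. cbv zeta. fold c0.
  destruct (Rlt_dec (mod_a a t) (c0 + a - b)); [unfold c0 in *; lra|].
  destruct (Rlt_dec (mod_a a t) c0); [lra|reflexivity].
Qed.

Lemma R_cases w : S_abc a b c w ->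
  (mod_a a w < c0 + a - b /\ R_abc a b c w = w + nn * b + b) \/
  (c0 <= mod_a a w /\ R_abc a b c w = w + nn * b).
Proof.
  intros Hw. destruct (S_forward a b c Ha Hab Hbc Hc0l Hc0u w Hw) as [_ Hh]. fold c0 in Hh.
  destruct (Rlt_dec (mod_a a w) (c0 + a - b)) as [H|H].
  - left. split; auto. apply R_A; auto.
  - right. assert (c0 <= mod_a a w) by lra. split; auto. apply R_B; auto.
Qed.

Lemma claimA u : 0 <= u < c0 + a - b -> (S_abc a b c u <-> S_abc a b c (u + c1 + b)).
Proof.
  intros Hu. assert (Hm : mod_a a u = u).
  { rewrite (mod_eq a u 0 Ha); change (IZR 0) with 0; [ring|]. unfold c0 in *; lra. }
  split.
  - intros Su. destruct (S_forward a b c Ha Hab Hbc Hc0l Hc0u u Su) as [SR _].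
    rewrite R_A in SR by (rewrite Hm; lra). rewrite key in SR.
    replace (u + (c1 + a * IZR N) + b) with ((u + c1 + b) + a * IZR N) in SR by ring.
    apply perS_iff in SR. exact SR.
  - intros Sv. apply (perS a b c _ N) in Sv.
    destruct (S_backward a b c Ha Hab Hbc Hc0l Hc0u _ Sv) as [w [Sw Rw]].
    pose proof key as Hk.
    destruct (R_cases w Sw) as [[H1 H2]|[H1 H2]].
    + assert (w = u) by lra. subst w. exact Sw.
    + exfalso. assert (Ew : w = u + b) by lra.
      rewrite Ew in H1. rewrite (mod_eq a (u + b) 1 Ha) in H1; change (IZR 1) with 1 in *;
        unfold c0 in *; lra.
Qed.

Lemma claimB u : c0 <= u < a -> (S_abc a b c u <-> S_abc a b c (u + c1)).
Proof.
  intros Hu. assert (Hm : mod_a a u = u).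
  { rewrite (mod_eq a u 0 Ha); change (IZR 0) with 0; [ring|]. unfold c0 in *; lra. }
  split.
  - intros Su. destruct (S_forward a b c Ha Hab Hbc Hc0l Hc0u u Su) as [SR _].
    rewrite R_B in SR by (rewrite Hm; lra). rewrite key in SR.
    replace (u + (c1 + a * IZR N)) with ((u + c1) + a * IZR N) in SR by ring.
    apply perS_iff in SR. exact SR.
  - intros Sv. apply (perS a b c _ N) in Sv.
    destruct (S_backward a b c Ha Hab Hbc Hc0l Hc0u _ Sv) as [w [Sw Rw]].
    pose proof key as Hk.
    destruct (R_cases w Sw) as [[H1 H2]|[H1 H2]].
    + exfalso. assert (Ew : w = u - b) by lra.
      rewrite Ew in H1. rewrite (mod_eq a (u - b) (-1) Ha) in H1; change (IZR (-1)) with (-1) in *;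
        unfold c0 in *; lra.
    + assert (w = u) by lra. subst w. exact Sw.
Qed.

Lemma claimG u : c1 <= u < c1 + b - a -> ~ S_abc a b c u.
Proof.
  intros Hu Su.
  destruct (S_backward a b c Ha Hab Hbc Hc0l Hc0u _ Su) as [w [Sw Rw]].
  pose proof (mod_bounds a w Ha) as [Hr0 Hr1].
  set (K := Int_part (w / a)).
  assert (Ew : w = mod_a a w + a * IZR K) by (unfold mod_a, floorR, K; ring).
  set (r := mod_a a w) in *.
  pose proof key as Hk.
  destruct (R_cases w Sw) as [[H1 H2]|[H1 H2]]; fold r in H1.
  - assert (Ej : a * IZR (K + N) = u - c1 - b - r) by (rewrite plus_IZR; lra).
    assert (-2 < IZR (K + N) < -1) by (unfold c0 in *; split; nra).
    destruct H as [L1 L2]. apply lt_IZR in L1. apply lt_IZR in L2. lia.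
  - assert (Ej : a * IZR (K + N) = u - c1 - r) by (rewrite plus_IZR; lra).
    assert (-1 < IZR (K + N) < 0) by (unfold c0 in *; split; nra).
    destruct H as [L1 L2]. apply lt_IZR in L1. apply lt_IZR in L2. lia.
Qed.


Lemma main_core t : S_abc a b c t ->
  exists k : Z, Y_abc a b c (R_abc a b c t) - Y_abc a b c t - Y_abc a b c (c1 + b - a)
      = IZR k * Y_abc a b c a.
Proof.
  intros St.
  pose proof (mod_bounds a t Ha) as [Hr0 Hr1].
  set (K := Int_part (t / a)).
  assert (Et : t = mod_a a t + a * IZR K) by (unfold mod_a, floorR, K; ring).
  set (r := mod_a a t) in *.
  pose proof key as Hk.
  assert (Yt : Y_abc a b c t = Y_abc a b c r + IZR K * Y_abc a b c a)
    by (rewrite Et at 1; apply Yshift; auto).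
  destruct (R_cases t St) as [[H1 H2]|[H1 H2]]; fold r in H1.
  - exists (N + 1)%Z. rewrite H2.
    replace (t + nn * b + b) with ((r + c1 + b) + a * IZR (K + N)) by (rewrite plus_IZR; lra).
    rewrite Yshift by auto.
    assert (Y1 : Y_abc a b c (c1 + b) = Y_abc a b c (c1 + b - a) + IZR 1 * Y_abc a b c a).
    { replace (c1 + b) with ((c1 + b - a) + a * IZR 1) at 1 by (change (IZR 1) with 1; ring).
      apply Yshift; auto. }
    assert (D : Y_abc a b c (r + c1 + b) - Y_abc a b c (c1 + b) = G (S_abc a b c) (c1 + b) (r + c1 + b))
      by (apply Ydiff; auto; lra).
    assert (Yr : Y_abc a b c r = G (S_abc a b c) 0 r) by (apply Y_pos; auto).
    assert (Gs : G (S_abc a b c) 0 r = G (S_abc a b c) (c1 + b) (r + c1 + b)).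
    { rewrite (G_shift _ 0 r (c1 + b)).
      replace (0 + (c1 + b)) with (c1 + b) by ring. replace (r + (c1 + b)) with (r + c1 + b) by ring.
      apply G_ext. intros u Hu. rewrite (claimA (u - (c1 + b))) by (unfold c0 in *; lra).
      replace (u - (c1 + b) + c1 + b) with u by ring. tauto. }
    rewrite Yt. rewrite !plus_IZR in *. change (IZR 1) with 1 in *. nra.
  - exists N. rewrite H2.
    replace (t + nn * b) with ((r + c1) + a * IZR (K + N)) by (rewrite plus_IZR; lra).
    rewrite Yshift by auto.
    assert (Y1 : Y_abc a b c (c1 + a) = Y_abc a b c c1 + IZR 1 * Y_abc a b c a).
    { replace (c1 + a) with (c1 + a * IZR 1) by (change (IZR 1) with 1; ring). apply Yshift; auto. }
    assert (D0 : Y_abc a b c (c1 + b - a) - Y_abc a b c c1 = G (S_abc a b c) c1 (c1 + b - a))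
      by (apply Ydiff; auto; lra).
    assert (Z0 : G (S_abc a b c) c1 (c1 + b - a) = 0).
    { apply G_zero. intros u Hu. apply claimG; auto. }
    assert (D1 : Y_abc a b c (a + c1) - Y_abc a b c (r + c1) = G (S_abc a b c) (r + c1) (a + c1))
      by (apply Ydiff; auto; lra).
    assert (D2 : Y_abc a b c a - Y_abc a b c r = G (S_abc a b c) r a)
      by (apply Ydiff; auto; lra).
    assert (Gs : G (S_abc a b c) r a = G (S_abc a b c) (r + c1) (a + c1)).
    { rewrite (G_shift _ r a c1). apply G_ext. intros u Hu.
      rewrite (claimB (u - c1)) by (unfold c0 in *; lra).
      replace (u - c1 + c1) with u by ring. tauto. }
    replace (Y_abc a b c (a + c1)) with (Y_abc a b c (c1 + a)) in D1 by (f_equal; ring).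
    rewrite Yt. rewrite !plus_IZR in *. change (IZR 1) with 1 in *. nra.
Qed.

End Main.

Theorem theorem5p5 (a b c : R) :
  0 < a -> 0 < b -> 0 < c -> a < b -> b < c ->
  2 <= floorR (c / b) ->
  b - a < c0_of b c -> c0_of b c < a ->
  0 <= c1_of a b c -> c1_of a b c <= 2 * a - b ->
  (exists t, S_abc a b c t) ->
  ((~ exists p q : Z, (q <> 0)%Z /\ a / b = IZR p / IZR q) \/
   (exists p q : Z, (0 < p)%Z /\ (0 < q)%Z /\ Z.gcd p q = 1%Z /\
      a / b = IZR p / IZR q /\ exists k : Z, c = IZR k * (b / IZR q))) ->
  forall t, S_abc a b c t ->
    exists k : Z,
      Y_abc a b c (R_abc a b c t) - Y_abc a b c t - Y_abc a b c (c1_of a b c + b - a)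
      = IZR k * Y_abc a b c a.
Proof.
  intros Ha Hb Hc Hab Hbc _ Hl Hu _ _ _ _ t St.
  exact (main_core a b c Ha Hab Hbc Hl Hu t St).
Qed.
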